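(* Let $\mathcal H$ be an infinite-dimensional complex Hilbert space and let $\mathcal C_f(\mathcal H)$ be the set of closed forms in $\mathcal V_f(\mathcal H)$. Then $(\mathcal C_f(\mathcal H);\oplus_{|\mathcal C_f(\mathcal H)},o)$ is a generalized effect algebra.
   Context: Bilinear forms $t$ on $\mathcal H$ are sesquilinear maps $D(t)\times D(t)\to\mathbb C$ on a dense linear subspace $D(t)$ (linear in the first argument); $t$ is positive if $t(x,x)\ge0$ on $D(t)$, bounded if $\sup\{t(x,x)\mid x\in D(t),\|x\|=1\}<\infty$. The sum $t+s$ has domain $D(t)\cap D(s)$. $o$ is the zero form on $\mathcal H$. $\mathcal V_f(\mathcal H)$ is the set of positive bilinear forms with dense domain such that $D(t)=\mathcal H$ whenever $t$ is bounded; $t\oplus s$ is defined iff $t$ or $s$ is bounded or $D(t)=D(s)$, and then $t\oplus s=t+s$. A positive form $t$ is closed if $D(t)$ is a Hilbert space under $(x,y)_t=t(x,y)+(1+m_t)(x,y)$ with $m_t=\inf\{t(x,x)\mid x\in D(t),\|x\|=1\}$. For $Q\subseteq\mathcal V_f(\mathcal H)$, $x\oplus_{|Q}y$ is defined iff $x\oplus y$ is defined and lies in $Q$, and then equals $x\oplus y$. A generalized effect algebra is a structure $(E;\oplus,0)$ with a partial operation that is commutative and associative (when one side is defined), has $x\oplus0=x$, is cancellative, and satisfies $x\oplus y=0\Rightarrow x=y=0$. *)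

(* Defs.v *)
From HB Require Import structures.
From mathcomp Require Import all_boot all_order all_algebra.
From mathcomp Require Import complex.
From mathcomp Require Import boolp classical_sets reals.

Set Implicit Arguments.
Unset Strict Implicit.
Unset Printing Implicit Defensive.

Import Order.TTheory GRing.Theory Num.Theory.
Local Open Scope ring_scope.
Local Open Scope classical_set_scope.
Local Open Scope complex_scope.
Local Open Scope ring_scope.

Section Hilbert.
Context {R : realType} {V : lmodType R[i]}.
Variable ip : V -> V -> R[i].

Definition is_inner_product : Prop :=
  [/\ (forall (a : R[i]) (x y z : V), ip (a *: x + y) z = a * ip x z + ip y z),
      (forall x y : V, ip y x = (ip x y)^*),
      (forall x : V, 0 <= ip x x) &
      (forall x : V, ip x x = 0 -> x = 0)].

Definition hnorm (x : V) : R := Num.sqrt (complex.Re (ip x x)).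

Definition hcauchy (u : nat -> V) : Prop :=
  forall e : R, 0 < e -> exists N : nat, forall n m : nat,
    (N <= n)%N -> (N <= m)%N -> hnorm (u n - u m) < e.

Definition hconverges_to (u : nat -> V) (x : V) : Prop :=
  forall e : R, 0 < e -> exists N : nat, forall n : nat,
    (N <= n)%N -> hnorm (u n - x) < e.

Definition hcomplete : Prop :=
  forall u : nat -> V, hcauchy u -> exists x : V, hconverges_to u x.

Definition infinite_dimensional : Prop :=
  forall n : nat, exists v : 'I_n -> V,
    forall c : 'I_n -> R[i], \sum_(j < n) c j *: v j = 0 -> forall j, c j = 0.

(* A form is represented by its domain D(t) and a function V -> V -> C
   whose values outside D(t) x D(t) are normalized to 0 (so that two forms
   are equal iff they have the same domain and agree on it). *)
Definition form := (set V * (V -> V -> R[i]))%type.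

Definition fdom (t : form) : set V := t.1.
Definition fval (t : form) : V -> V -> R[i] := t.2.

Definition linear_subspace (D : set V) : Prop :=
  D 0 /\ forall (a : R[i]) x y, D x -> D y -> D (a *: x + y).

Definition dense (D : set V) : Prop :=
  forall (x : V) (e : R), 0 < e -> exists2 y, D y & hnorm (x - y) < e.

Definition is_form (t : form) : Prop :=
  [/\ linear_subspace (fdom t), dense (fdom t),
      (forall (a : R[i]) x y z, fdom t x -> fdom t y -> fdom t z ->
         fval t (a *: x + y) z = a * fval t x z + fval t y z),
      (forall (a : R[i]) x y z, fdom t x -> fdom t y -> fdom t z ->
         fval t x (a *: y + z) = a^* * fval t x y + fval t x z) &
      (forall x y, ~ (fdom t x /\ fdom t y) -> fval t x y = 0)].

Definition form_positive (t : form) : Prop :=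
  forall x, fdom t x -> 0 <= fval t x x.

Definition form_bounded (t : form) : Prop :=
  exists M : R, forall x, fdom t x -> hnorm x = 1 -> fval t x x <= M%:C.

Definition zero_form : form := (setT, fun _ _ => 0).

Definition Vf (t : form) : Prop :=
  [/\ is_form t, form_positive t & (form_bounded t -> fdom t = setT)].

Definition form_m (t : form) : R :=
  inf [set complex.Re (fval t x x) | x in [set x | fdom t x /\ hnorm x = 1]].

(* the norm of (x,y)_t = t(x,y) + (1 + m_t)(x,y) on D(t) *)
Definition tnorm (t : form) (x : V) : R :=
  Num.sqrt (complex.Re (fval t x x + (1 + form_m t)%:C * ip x x)).

Definition form_closed (t : form) : Prop :=
  forall u : nat -> V, (forall n, fdom t (u n)) ->
    (forall e : R, 0 < e -> exists N : nat, forall n m : nat,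
        (N <= n)%N -> (N <= m)%N -> tnorm t (u n - u m) < e) ->
    exists2 x, fdom t x &
      (forall e : R, 0 < e -> exists N : nat, forall n : nat,
         (N <= n)%N -> tnorm t (u n - x) < e).

Definition Cf (t : form) : Prop := Vf t /\ form_closed t.

Definition form_sum_is (t s w : form) : Prop :=
  fdom w = fdom t `&` fdom s /\
  forall x y, fval w x y =
    if `[< fdom w x /\ fdom w y >] then fval t x y + fval s x y else 0.

Definition oplus_is (t s w : form) : Prop :=
  (form_bounded t \/ form_bounded s \/ fdom t = fdom s) /\ form_sum_is t s w.

End Hilbert.

Definition restrict_op {E : Type} (Q : E -> Prop) (op : E -> E -> E -> Prop)
  : E -> E -> E -> Prop := fun x y w => op x y w /\ Q w.

(* Generalized effect algebra with carrier Q (a subset of E), partial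
   operation op given as a relation (op x y w  <->  x (+) y is defined and
   equals w) and zero z. *)
Definition generalized_effect_algebra {E : Type} (Q : E -> Prop)
  (op : E -> E -> E -> Prop) (z : E) : Prop :=
  Q z /\
  [/\
      (forall x y w w', Q x -> Q y -> op x y w -> op x y w' -> w = w'),
      (forall x y w, Q x -> Q y -> op x y w -> Q w) &
      (forall x y w, Q x -> Q y -> op x y w -> op y x w)] /\
  [/\
      (forall x y u, Q x -> Q y -> Q u ->
         (forall xy v, op x y xy -> op xy u v ->
            exists2 yu, op y u yu & op x yu v) /\
         (forall yu v, op y u yu -> op x yu v ->
            exists2 xy, op x y xy & op xy u v)),
      (forall x, Q x -> op x z x),
      (forall x y u w, Q x -> Q y -> Q u -> op x y w -> op x u w -> y = u) &
      (forall x y, Q x -> Q y -> op x y z -> x = z /\ y = z)].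

(* Main.v *)
Require Import Defs.
From HB Require Import structures.
From mathcomp Require Import all_boot all_order all_algebra.
From mathcomp Require Import complex.
From mathcomp Require Import boolp classical_sets reals.
From mathcomp Require Import ring lra.

Set Implicit Arguments.
Unset Strict Implicit.
Unset Printing Implicit Defensive.
Import Order.TTheory GRing.Theory Num.Theory.
Local Open Scope ring_scope.
Local Open Scope classical_set_scope.
Local Open Scope complex_scope.
Local Open Scope ring_scope.

Section Cx.
Variable R : realType.
Implicit Types z w : R[i].

Lemma ReD z w : complex.Re (z + w) = complex.Re z + complex.Re w.
Proof. by case: z; case: w. Qed.
Lemma ReN z : complex.Re (- z) = - complex.Re z.
Proof. by case: z. Qed.
Lemma ReB z w : complex.Re (z - w) = complex.Re z - complex.Re w.
Proof. by rewrite ReD ReN. Qed.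
Lemma ReMC (t : R) z : complex.Re (t%:C * z) = t * complex.Re z.
Proof. case: z => a b /=. by rewrite mul0r subr0. Qed.
Lemma ReC (t : R) : complex.Re (t%:C) = t.
Proof. by []. Qed.
Lemma ge0C z : 0 <= z -> z = (complex.Re z)%:C.
Proof. case: z => a b; rewrite lecE /= => /andP[/eqP -> _]. by []. Qed.
Lemma ge0Re z : 0 <= z -> 0 <= complex.Re z.
Proof. case: z => a b; rewrite lecE /= => /andP[_ ->]. by []. Qed.
Lemma leRe z w : z <= w -> complex.Re z <= complex.Re w.
Proof. case: z => a b; case: w => c d; rewrite lecE /= => /andP[_ ->]. by []. Qed.
Lemma geRe_C z (t : R) : 0 <= z -> complex.Re z <= t -> z <= t%:C.
Proof. move=> /ge0C ->. by rewrite lecR. Qed.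
Lemma conjRC (t : R) : (t%:C)^* = t%:C.
Proof. apply: conj_Creal. by rewrite complex_real. Qed.
Lemma C0 : (0 : R)%:C = 0. Proof. by []. Qed.
End Cx.

Section Sesq.
Variables (R : realType) (V : lmodType R[i]).
Implicit Types (D : set V) (f : V -> V -> R[i]).

Definition sesq D f :=
 [/\ linear_subspace D,
   (forall a x y z, D x -> D y -> D z -> f (a *: x + y) z = a * f x z + f y z) &
   (forall a x y z, D x -> D y -> D z -> f x (a *: y + z) = a^* * f x y + f x z)].

Variables (D : set V) (f : V -> V -> R[i]) (Hs : sesq D f).

Lemma D0 : D 0. Proof. by case: Hs => -[]. Qed.
Lemma DZD a x y : D x -> D y -> D (a *: x + y).
Proof. by case: Hs => -[_ h] _ _; apply: h. Qed.
Lemma DD x y : D x -> D y -> D (x + y).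
Proof. by move=> hx hy; have := DZD 1 hx hy; rewrite scale1r. Qed.
Lemma DZ a x : D x -> D (a *: x).
Proof. by move=> hx; have := DZD a hx D0; rewrite addr0. Qed.
Lemma DN x : D x -> D (- x).
Proof. by move=> hx; have := DZ (-1) hx; rewrite scaleN1r. Qed.
Lemma DB x y : D x -> D y -> D (x - y).
Proof. by move=> hx hy; apply: DD => //; apply: DN. Qed.

Lemma f0l z : D z -> f 0 z = 0.
Proof.
move=> hz; case: Hs => _ h _; have := h 1 0 0 z D0 D0 hz.
rewrite scaler0 addr0 mul1r => e.
by apply: (@addIr _ (f 0 z)); rewrite add0r -e.
Qed.
Lemma f0r z : D z -> f z 0 = 0.
Proof.
move=> hz; case: Hs => _ _ h; have := h 1 z 0 0 hz D0 D0.
rewrite scaler0 addr0 rmorph1 mul1r => e.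
by apply: (@addIr _ (f z 0)); rewrite add0r -e.
Qed.
Lemma fDl x y z : D x -> D y -> D z -> f (x + y) z = f x z + f y z.
Proof. by move=> hx hy hz; case: Hs => _ h _; have := h 1 x y z hx hy hz; rewrite scale1r mul1r. Qed.
Lemma fDr x y z : D x -> D y -> D z -> f x (y + z) = f x y + f x z.
Proof. by move=> hx hy hz; case: Hs => _ _ h; have := h 1 x y z hx hy hz; rewrite scale1r rmorph1 mul1r. Qed.
Lemma fZl a x z : D x -> D z -> f (a *: x) z = a * f x z.
Proof. by move=> hx hz; case: Hs => _ h _; have := h a x 0 z hx D0 hz; rewrite addr0 f0l // addr0. Qed.
Lemma fZr a x z : D x -> D z -> f x (a *: z) = a^* * f x z.
Proof. by move=> hx hz; case: Hs => _ _ h; have := h a x z 0 hx hz D0; rewrite addr0 f0r // addr0. Qed.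
Lemma fNl x z : D x -> D z -> f (- x) z = - f x z.
Proof. by move=> hx hz; rewrite -scaleN1r fZl // mulN1r. Qed.
Lemma fNr x z : D x -> D z -> f x (- z) = - f x z.
Proof. by move=> hx hz; rewrite -scaleN1r fZr // rmorphN1 mulN1r. Qed.
Lemma fBl x y z : D x -> D y -> D z -> f (x - y) z = f x z - f y z.
Proof. by move=> hx hy hz; rewrite fDl ?fNl //; apply: DN. Qed.
Lemma fBr x y z : D x -> D y -> D z -> f x (y - z) = f x y - f x z.
Proof. by move=> hx hy hz; rewrite fDr ?fNr //; apply: DN. Qed.

Lemma fDD x y : D x -> D y ->
  f (x + y) (x + y) = f x x + f x y + f y x + f y y.
Proof.
move=> hx hy; rewrite fDl ?fDr //; try apply: DD => //.
by rewrite !addrA.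
Qed.
Lemma fBB x y : D x -> D y ->
  f (x - y) (x - y) = f x x - f x y - f y x + f y y.
Proof.
move=> hx hy; rewrite fBl ?fBr //; try apply: DB => //.
rewrite opprB !addrA; ring.
Qed.
Lemma fZZ (t : R) x : D x -> f (t%:C *: x) (t%:C *: x) = t%:C * t%:C * f x x.
Proof.
move=> hx; rewrite fZl ?fZr //; last by apply: DZ.
by rewrite conjRC mulrA.
Qed.
End Sesq.

Section Main.
Variables (R : realType) (V : lmodType R[i]) (ip : V -> V -> R[i]).
Hypothesis Hip : is_inner_product ip.
Local Notation frm := (@Defs.form R V).

Lemma ip_sesq : sesq setT ip.
Proof.
case: Hip => h1 h2 _ _; split.
- by split.
- by move=> a x y z _ _ _; apply: h1.
- move=> a x y z _ _ _.
  by rewrite h2 h1 rmorphD rmorphM [ip x y]h2 [ip x z]h2.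
Qed.

Definition nip (v : V) : R := complex.Re (ip v v).

Lemma nip_ge0 v : 0 <= nip v.
Proof. by case: Hip => _ _ h _; apply: ge0Re. Qed.
Lemma ipC v : ip v v = (nip v)%:C.
Proof. by case: Hip => _ _ h _; apply: ge0C. Qed.
Lemma nip_eq0 v : nip v = 0 -> v = 0.
Proof. by case: Hip => _ _ _ h e; apply: h; rewrite ipC e. Qed.
Lemma nipN v : nip (- v) = nip v.
Proof.
rewrite /nip (fNl ip_sesq) // (fNr ip_sesq) //. by rewrite opprK.
Qed.
Lemma nipB v w : nip (v - w) = nip (w - v).
Proof. by rewrite -nipN opprB. Qed.
Lemma nip_par p q : nip (p + q) <= 2 * nip p + 2 * nip q.
Proof.
have e1 := fDD ip_sesq (I : setT p) (I : setT q).
have e2 := fBB ip_sesq (I : setT p) (I : setT q).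
have : nip (p + q) + nip (p - q) = 2 * nip p + 2 * nip q.
  rewrite /nip e1 e2 !(ReD, ReB). lra.
have := nip_ge0 (p - q). lra.
Qed.
Lemma hnormE v : hnorm ip v = Num.sqrt (nip v).
Proof. by []. Qed.


Lemma form_sesq (t : frm) : is_form ip t -> sesq (fdom t) (fval t).
Proof. by case=> h1 _ h3 h4 _; split. Qed.
Lemma fval_out (t : frm) a b : is_form ip t -> ~ (fdom t a /\ fdom t b) -> fval t a b = 0.
Proof. by case=> _ _ _ _ h; apply: h. Qed.

Definition Fq (t : frm) v := complex.Re (fval t v v).

Lemma fval_ge0 (t : frm) v : is_form ip t -> form_positive t -> 0 <= fval t v v.
Proof.
move=> hf hp; case: (pselect (fdom t v)) => hv; first by apply: hp.
by rewrite fval_out //; case.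
Qed.
Lemma Fq_ge0 (t : frm) v : is_form ip t -> form_positive t -> 0 <= Fq t v.
Proof. by move=> hf hp; apply: ge0Re; apply: fval_ge0. Qed.
Lemma fvalC (t : frm) v : is_form ip t -> form_positive t -> fval t v v = (Fq t v)%:C.
Proof. by move=> hf hp; apply: ge0C; apply: fval_ge0. Qed.

Lemma m_ge0 (t : frm) : (forall v, 0 <= Fq t v) -> 0 <= form_m ip t.
Proof.
move=> h; rewrite /form_m.
set S := [set _ | _ in _].
case: (pselect (S !=set0)) => hS.
  apply: lb_le_inf => // r [v _ <-]. exact: h.
have -> : S = set0.
  apply/seteqP; split => r // Sr; exfalso; apply: hS; by exists r.
by rewrite inf0.
Qed.

Definition Q (t : frm) v := Fq t v + (1 + form_m ip t) * nip v.

Lemma tnormE t v : tnorm ip t v = Num.sqrt (Q t v).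
Proof. by rewrite /tnorm ReD ReMC. Qed.

Lemma Q_ge0 t v : is_form ip t -> form_positive t -> 0 <= Q t v.
Proof.
move=> hf hp; have h1 := Fq_ge0 v hf hp; have h2 := nip_ge0 v.
have h3 : 0 <= form_m ip t by apply: m_ge0 => w; apply: Fq_ge0.
rewrite /Q; apply: addr_ge0 => //; apply: mulr_ge0 => //; lra.
Qed.

Lemma nip_leQ t v : is_form ip t -> form_positive t -> nip v <= Q t v.
Proof.
move=> hf hp; have h1 := Fq_ge0 v hf hp; have h2 := nip_ge0 v.
have h3 : 0 <= form_m ip t by apply: m_ge0 => w; apply: Fq_ge0.
rewrite /Q. have : 0 <= form_m ip t * nip v by apply: mulr_ge0.
lra.
Qed.
Lemma Fq_leQ t v : is_form ip t -> form_positive t -> Fq t v <= Q t v.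
Proof.
move=> hf hp; have h1 := Fq_ge0 v hf hp; have h2 := nip_ge0 v.
have h3 : 0 <= form_m ip t by apply: m_ge0 => w; apply: Fq_ge0.
rewrite /Q. have : 0 <= (1 + form_m ip t) * nip v by apply: mulr_ge0 => //; lra.
lra.
Qed.

Definition evs (g : nat -> nat -> R) := forall e, 0 < e -> exists N : nat,
  forall n m, (N <= n)%N -> (N <= m)%N -> g n m < e.
Definition evs1 (g : nat -> R) := forall e, 0 < e -> exists N : nat,
  forall n, (N <= n)%N -> g n < e.

Lemma lt_sqrt (q e : R) : 0 <= q -> 0 < e -> (Num.sqrt q < e) = (q < e ^+ 2).
Proof.
move=> hq he; rewrite -[X in _ < X](ger0_norm (ltW he)) -sqrtr_sqr ltr_sqrt //.
by rewrite exprn_gt0.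
Qed.

Lemma evs_sqrt g : (forall n m, 0 <= g n m) ->
  evs (fun n m => Num.sqrt (g n m)) <-> evs g.
Proof.
move=> hg; split => h e he.
- have hse : 0 < Num.sqrt e by rewrite sqrtr_gt0.
  have [N hN] := h (Num.sqrt e) hse.
  exists N => n m hn hm; have := hN n m hn hm.
  by rewrite ltr_sqrt.
- have [N hN] := h (e ^+ 2) (exprn_gt0 _ he).
  by exists N => n m hn hm; rewrite lt_sqrt //; apply: hN.
Qed.
Lemma evs1_sqrt g : (forall n, 0 <= g n) ->
  evs1 (fun n => Num.sqrt (g n)) <-> evs1 g.
Proof.
move=> hg; split => h e he.
- have hse : 0 < Num.sqrt e by rewrite sqrtr_gt0.
  have [N hN] := h (Num.sqrt e) hse.
  exists N => n hn; have := hN n hn.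
  by rewrite ltr_sqrt.
- have [N hN] := h (e ^+ 2) (exprn_gt0 _ he).
  by exists N => n hn; rewrite lt_sqrt //; apply: hN.
Qed.

Lemma evs_dom g h (K : R) : 0 < K -> (forall n m, g n m <= K * h n m) -> evs h -> evs g.
Proof.
move=> hK hgh hh e he; have [N hN] := hh (e / K) (divr_gt0 he hK).
exists N => n m hn hm; apply: (le_lt_trans (hgh n m)).
by rewrite -ltr_pdivlMl // mulrC; apply: hN.
Qed.
Lemma evs1_dom g h (K : R) : 0 < K -> (forall n, g n <= K * h n) -> evs1 h -> evs1 g.
Proof.
move=> hK hgh hh e he; have [N hN] := hh (e / K) (divr_gt0 he hK).
exists N => n hn; apply: (le_lt_trans (hgh n)).
by rewrite -ltr_pdivlMl // mulrC; apply: hN.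
Qed.
Lemma evs1_add g h : evs1 g -> evs1 h -> evs1 (fun n => g n + h n).
Proof.
move=> hg hh e he.
have h20 : (0:R) < 2 by lra.
have [N1 h1] := hg (e / 2) (divr_gt0 he h20).
have [N2 h2] := hh (e / 2) (divr_gt0 he h20).
exists (maxn N1 N2) => n hn.
have := h1 n (leq_trans (leq_maxl _ _) hn).
have := h2 n (leq_trans (leq_maxr _ _) hn). lra.
Qed.

Definition closedQ (t : frm) := forall u : nat -> V, (forall n, fdom t (u n)) ->
  evs (fun n m => Q t (u n - u m)) ->
  exists2 x, fdom t x & evs1 (fun n => Q t (u n - x)).

Lemma closedE t : is_form ip t -> form_positive t -> form_closed ip t <-> closedQ t.
Proof.
move=> hf hp; split.
- move=> hc u hu hC.
  have hC' : forall e : R, 0 < e -> exists N : nat, forall n m : nat,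
        (N <= n)%N -> (N <= m)%N -> tnorm ip t (u n - u m) < e.
    move=> e he; have := (evs_sqrt (fun n m => Q_ge0 (u n - u m) hf hp)).2 hC e he.
    by case=> N hN; exists N => n m hn hm; rewrite tnormE; apply: hN.
  have [x hx hcv] := hc u hu hC'.
  exists x => //; apply/(evs1_sqrt (fun n => Q_ge0 (u n - x) hf hp)).
  move=> e he; have [N hN] := hcv e he; exists N => n hn.
  by rewrite -tnormE; apply: hN.
- move=> hc u hu hC.
  have hC' : evs (fun n m => Q t (u n - u m)).
    apply/(evs_sqrt (fun n m => Q_ge0 (u n - u m) hf hp)).
    move=> e he; have [N hN] := hC e he; exists N => n m hn hm.
    by rewrite -tnormE; apply: hN.
  have [x hx hcv] := hc u hu hC'.
  exists x => // e he.
  have [N hN] := (evs1_sqrt (fun n => Q_ge0 (u n - x) hf hp)).2 hcv e he.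
  by exists N => n hn; rewrite tnormE; apply: hN.
Qed.


Section Sums.
Implicit Types t s w : frm.

Lemma sum_dom t s w : form_sum_is t s w -> fdom w = fdom t `&` fdom s.
Proof. by case. Qed.
Lemma sum_in t s w a b : form_sum_is t s w -> fdom w a -> fdom w b ->
  fval w a b = fval t a b + fval s a b.
Proof. by case=> _ h ha hb; rewrite h asboolT. Qed.
Lemma sum_out t s w a b : form_sum_is t s w -> ~ (fdom w a /\ fdom w b) ->
  fval w a b = 0.
Proof. by case=> _ h hab; rewrite h asboolF. Qed.
Lemma sum_C t s w : form_sum_is t s w -> form_sum_is s t w.
Proof.
case=> hd h; split; first by rewrite hd setIC.
by move=> a b; rewrite h addrC.
Qed.
Lemma sum_Dl t s w v : form_sum_is t s w -> fdom w v -> fdom t v.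
Proof. by move=> /sum_dom -> []. Qed.
Lemma sum_Dr t s w v : form_sum_is t s w -> fdom w v -> fdom s v.
Proof. by move=> /sum_dom -> []. Qed.

Definition defd t s := form_bounded ip t \/ form_bounded ip s \/ fdom t = fdom s.

Lemma inter_cases t s : Vf ip t -> Vf ip s -> defd t s ->
  fdom t `&` fdom s = fdom t \/ fdom t `&` fdom s = fdom s.
Proof.
case=> _ _ ht [_ _ hs] [/ht ->|[/hs ->|->]].
- by right; rewrite setTI.
- by left; rewrite setIT.
- by left; rewrite setIid.
Qed.

Lemma bounded_part t s w : is_form ip s -> form_positive s -> form_sum_is t s w ->
  fdom t `<=` fdom w -> form_bounded ip w -> form_bounded ip t.
Proof.
move=> hfs hps hsum hsub [M hM]; exists M => v hv h1.
apply: le_trans (hM v (hsub _ hv) h1).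
rewrite (sum_in hsum) ?lerDl; try exact: hsub.
exact: fval_ge0.
Qed.

Lemma sum_bounded t s w : is_form ip t -> form_positive t ->
  is_form ip s -> form_positive s -> form_sum_is t s w ->
  form_bounded ip t -> form_bounded ip s -> form_bounded ip w.
Proof.
move=> hft hpt hfs hps hsum [M1 h1] [M2 h2]; exists (M1 + M2) => v hv hn.
rewrite (sum_in hsum) //.
have ht := h1 v (sum_Dl hsum hv) hn; have hs := h2 v (sum_Dr hsum hv) hn.
apply: geRe_C; first by apply: addr_ge0; apply: fval_ge0.
by rewrite ReD; apply: lerD; [have := leRe ht | have := leRe hs].
Qed.

Lemma sum_Vf t s w : Vf ip t -> Vf ip s -> defd t s -> form_sum_is t s w -> Vf ip w.
Proof.
move=> hvt hvs hd hsum.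
have hvt' := hvt; have hvs' := hvs.
case: hvt' => hft hpt hbt; case: hvs' => hfs hps hbs.
have St := form_sesq hft; have Ss := form_sesq hfs.
have hdom := sum_dom hsum.
have Dw a : fdom w a <-> fdom t a /\ fdom s a by rewrite hdom.
have Dwi a : fdom t a -> fdom s a -> fdom w a by move=> ? ?; apply/Dw.
have hf : is_form ip w.
  split.
  - split; first by apply: Dwi; [exact: (D0 St) | exact: (D0 Ss)].
    move=> a x y /Dw[xt xs] /Dw[yt ys]; apply: Dwi; [exact: (DZD St) | exact: (DZD Ss)].
  - case: hft => _ dt _ _ _; case: hfs => _ ds _ _ _.
    by rewrite hdom; case: (inter_cases hvt hvs hd) => ->.
  - move=> a x y z hx hy hz; have [xt xs] := (Dw x).1 hx; have [yt ys] := (Dw y).1 hy; have [zt zs] := (Dw z).1 hz.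
    rewrite !(sum_in hsum) //; try (apply: Dwi; [exact: (DZD St) | exact: (DZD Ss)]).
    case: St => _ lt _; case: Ss => _ ls _.
    rewrite (lt a x y z xt yt zt) (ls a x y z xs ys zs). ring.
  - move=> a x y z hx hy hz; have [xt xs] := (Dw x).1 hx; have [yt ys] := (Dw y).1 hy; have [zt zs] := (Dw z).1 hz.
    rewrite !(sum_in hsum) //; try (apply: Dwi; [exact: (DZD St) | exact: (DZD Ss)]).
    case: St => _ _ lt; case: Ss => _ _ ls.
    rewrite (lt a x y z xt yt zt) (ls a x y z xs ys zs). ring.
  - by move=> x y h; exact: (sum_out hsum h).
have hp : form_positive w.
  move=> v hv; rewrite (sum_in hsum) //.
  by apply: addr_ge0; apply: fval_ge0.
split => // hb.
case: (inter_cases hvt hvs hd) => he.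
- rewrite hdom he; apply: hbt; apply: (bounded_part hfs hps hsum) => //.
  by rewrite hdom he.
- rewrite hdom he; apply: hbs; apply: (bounded_part hft hpt (sum_C hsum)) => //.
  by rewrite hdom he.
Qed.


Lemma Fq_sum t s w v : is_form ip t -> is_form ip s -> form_sum_is t s w ->
  fdom w v -> Fq w v = Fq t v + Fq s v.
Proof. by move=> ? ? hsum hv; rewrite /Fq (sum_in hsum) // ReD. Qed.

Lemma sum_closed t s w : Cf ip t -> Cf ip s -> defd t s -> form_sum_is t s w ->
  form_closed ip w.
Proof.
move=> [hvt hct] [hvs hcs] hd hsum.
have hvw := sum_Vf hvt hvs hd hsum.
case: (hvt) => hft hpt _; case: (hvs) => hfs hps _; case: (hvw) => hfw hpw _.
have Sw := form_sesq hfw.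
have mt : 0 <= form_m ip t by apply: m_ge0 => v; apply: Fq_ge0.
have ms : 0 <= form_m ip s by apply: m_ge0 => v; apply: Fq_ge0.
have mw : 0 <= form_m ip w by apply: m_ge0 => v; apply: Fq_ge0.
apply/(closedE hfw hpw) => u hu hC.
have hQt v : fdom w v -> Q t v <= (1 + form_m ip t) * Q w v.
  move=> hv; rewrite /Q (Fq_sum hft hfs hsum hv).
  have f1 := Fq_ge0 v hft hpt; have f2 := Fq_ge0 v hfs hps; have f3 := nip_ge0 v.
  have p1 := mulr_ge0 mt f1; have p2 := mulr_ge0 mt f2.
  have p3 := mulr_ge0 mt (mulr_ge0 mw f3).
  have p4 := mulr_ge0 mw f3.
  nra.
have hQs v : fdom w v -> Q s v <= (1 + form_m ip s) * Q w v.
  move=> hv; rewrite /Q (Fq_sum hft hfs hsum hv).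
  have f1 := Fq_ge0 v hft hpt; have f2 := Fq_ge0 v hfs hps; have f3 := nip_ge0 v.
  have p1 := mulr_ge0 ms f1; have p2 := mulr_ge0 ms f2.
  have p3 := mulr_ge0 ms (mulr_ge0 mw f3).
  have p4 := mulr_ge0 mw f3.
  nra.
have [xt hxt cvt] : exists2 x, fdom t x & evs1 (fun n => Q t (u n - x)).
  apply: ((closedE hft hpt).1 hct u) => [n|]; first exact: (sum_Dl hsum (hu n)).
  apply: (evs_dom (K := 1 + form_m ip t)) hC; first lra.
  move=> n m; apply: hQt; apply: (DB Sw); exact: hu.
have [xs hxs cvs] : exists2 x, fdom s x & evs1 (fun n => Q s (u n - x)).
  apply: ((closedE hfs hps).1 hcs u) => [n|]; first exact: (sum_Dr hsum (hu n)).
  apply: (evs_dom (K := 1 + form_m ip s)) hC; first lra.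
  move=> n m; apply: hQs; apply: (DB Sw); exact: hu.
have exs : xt = xs.
  apply/subr0_eq/nip_eq0/le_anti; rewrite nip_ge0 andbT.
  apply/ler_addgt0Pr => e he; rewrite add0r.
  have he4 : 0 < e / 4 by apply: divr_gt0 => //; lra.
  have [N1 h1] := cvt _ he4; have [N2 h2] := cvs _ he4.
  set N := maxn N1 N2.
  have q1 := h1 N (leq_maxl _ _); have q2 := h2 N (leq_maxr _ _).
  have n1 := nip_leQ (u N - xt) hft hpt; have n2 := nip_leQ (u N - xs) hfs hps.
  have : xt - xs = (xt - u N) + (u N - xs) by rewrite addrA subrK.
  move=> ->; apply: le_trans (nip_par _ _) _.
  rewrite nipB; lra.
subst xs.
have hxw : fdom w xt by rewrite (sum_dom hsum).
exists xt => //.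
apply: (evs1_dom (K := 2 + form_m ip w)) (evs1_add cvt cvs); first lra.
move=> n; have hv : fdom w (u n - xt) by apply: (DB Sw).
have e1 := Fq_leQ (u n - xt) hft hpt; have e2 := Fq_leQ (u n - xt) hfs hps.
have e3 := nip_leQ (u n - xt) hft hpt.
have e4 := Fq_ge0 (u n - xt) hft hpt; have e5 := Fq_ge0 (u n - xt) hfs hps.
move: e1 e2 e3 e4 e5; rewrite /Q (Fq_sum hft hfs hsum hv) => e1 e2 e3 e4 e5.
have := nip_ge0 (u n - xt).
nra.
Qed.

End Sums.

Section Polar.

Lemma polar_id (x y : R[i]) : 2 * x = (x + y) + 'i * (- 'i * x + 'i * y).
Proof.
rewrite mulrDr !mulrA mulrN -expr2 sqrCi. ring.
Qed.

Lemma polar (f g : V -> V -> R[i]) : sesq setT f -> sesq setT g -> (forall a, f a a = g a a) ->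
  forall a b, f a b = g a b.
Proof.
move=> Sf Sg h a b.
have T a' : (setT : set V) a' by [].
have E1 : f a b + f b a = g a b + g b a.
  have := h (a + b); rewrite (fDD Sf) ?(fDD Sg) // !h.
  move=> e; apply: (@addIr _ (g b b)); apply: (@addrI _ (g a a)).
  by rewrite !addrA.
have E2 : - 'i * f a b + 'i * f b a = - 'i * g a b + 'i * g b a.
  have := h (a + 'i *: b); rewrite (fDD Sf) ?(fDD Sg) // !h.
  rewrite !(fZl Sf, fZr Sf, fZl Sg, fZr Sg) // conjCi => e.
  apply: (@addIr _ ('i * (- 'i * g b b))); apply: (@addrI _ (g a a)).
  by rewrite !addrA.
have h2 : (2 : R[i]) != 0 by rewrite pnatr_eq0.
by apply: (mulfI h2); rewrite (polar_id _ (f b a)) (polar_id _ (g b a)) E1 E2.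
Qed.

End Polar.

Section Dense.
Implicit Types t s w : frm.

Lemma bound_scale t : is_form ip t -> form_positive t -> fdom t = setT ->
  form_bounded ip t -> exists2 K, 0 <= K & forall v, Fq t v <= K * nip v.
Proof.
move=> hf hp hT [M hM]; exists `|M|; first exact: normr_ge0.
have St := form_sesq hf; rewrite hT in St.
move=> v; case: (eqVneq v 0) => [->|hv0].
  by rewrite /Fq /nip (f0l St) // (f0l ip_sesq) // mulr0.
have hn : 0 < nip v.
  rewrite lt_def nip_ge0 andbT; apply/eqP => /nip_eq0; exact/eqP.
set r := Num.sqrt (nip v).
have hr : 0 < r by rewrite sqrtr_gt0.
have hrr : r * r = nip v by rewrite -expr2 sqr_sqrtr // ltW.
set c := r^-1.
have hc : c * r = 1 by rewrite mulVf // gt_eqF.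
set w := c%:C *: v.
have hnw : nip w = c * c * nip v.
  by rewrite /nip (fZZ ip_sesq) // -mulrA !ReMC mulrA.
have hnw1 : nip w = 1.
  by rewrite hnw -hrr mulrA -(mulrA c c r) hc mulr1 hc.
have hw1 : hnorm ip w = 1 by rewrite hnormE hnw1 sqrtr1.
have hFw : Fq t w = c * c * Fq t v.
  by rewrite /Fq (fZZ St) // -mulrA !ReMC mulrA.
have hle : Fq t w <= M.
  have hwD : fdom t w by rewrite hT.
  by have := hM w hwD hw1 => /leRe.
have eF : Fq t v = (r * r) * (c * c * Fq t v).
  by rewrite !mulrA -(mulrA r r c) (mulrC r c) hc mulr1 (mulrC r c) hc mul1r.
rewrite eF -hrr (mulrC (r * r)); apply: ler_wpM2r; first by rewrite mulr_ge0 // ltW.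
rewrite -hFw; apply: le_trans hle _; exact: ler_norm.
Qed.

Lemma ineqG (f : V -> V -> R[i]) (t0 : R) p q : sesq setT f ->
  (forall v, 0 <= f v v) -> 0 < t0 ->
  complex.Re (f (p + q) (p + q)) <=
    (1 + t0) * complex.Re (f p p) + (1 + t0^-1) * complex.Re (f q q).
Proof.
move=> Sf hp ht.
have T a' : (setT : set V) a' by [].
set Fp := complex.Re (f p p); set Fq' := complex.Re (f q q).
set S := complex.Re (f p q) + complex.Re (f q p).
have E1 : complex.Re (f (p + q) (p + q)) = Fp + S + Fq'.
  by rewrite (fDD Sf) // !ReD /S addrA.
have E2 : complex.Re (f (t0%:C *: p - q) (t0%:C *: p - q)) = t0 * t0 * Fp - t0 * S + Fq'.
  rewrite (fBB Sf) // (fZZ Sf) // (fZl Sf) // (fZr Sf) // conjRC.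
  rewrite !(ReD, ReB, ReN) -mulrA !ReMC /S /Fp /Fq'; lra.
have h0 : 0 <= t0 * t0 * Fp - t0 * S + Fq' by rewrite -E2; apply: ge0Re.
have key : t0 * S <= t0 * (t0 * Fp + t0^-1 * Fq').
  rewrite [X in _ <= X]mulrDr !mulrA mulfV ?gt_eqF // mul1r; lra.
have key2 : S <= t0 * Fp + t0^-1 * Fq' by rewrite -(ler_pM2l ht).
rewrite E1. lra.
Qed.


Lemma arith1 (k Ya Yp Yq Ua Un Ky Ku n C d e : R) :
 Ya <= (1+k)*Yp + (1+k^-1)*Yq ->
 (1+k)*Yp <= (1+k)*((1+k)*Ua + (1+k^-1)*Un) ->
 (1+k^-1)*Yq <= (1+k^-1)*(Ky*n) ->
 (1+k)*((1+k^-1)*Un) <= (1+k)*((1+k^-1)*(Ku*n)) ->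
 C = (1+k)*(1+k^-1)*Ku + (1+k^-1)*Ky ->
 C*n <= C*d -> C*d <= e -> Ya <= (1+k)^+2 * Ua + e.
Proof. move=> h1 h2 h3 h4 -> h6 h7. lra. Qed.

Lemma diag_le y u (D : set V) : is_form ip y -> form_positive y -> fdom y = setT ->
  form_bounded ip y -> is_form ip u -> form_positive u -> fdom u = setT ->
  form_bounded ip u -> dense ip D -> (forall p, D p -> Fq y p = Fq u p) ->
  forall a, Fq y a <= Fq u a.
Proof.
move=> hfy hpy hTy hby hfu hpu hTu hbu hD hDp a.
have [Ky hKy0 hKy] := bound_scale hfy hpy hTy hby.
have [Ku hKu0 hKu] := bound_scale hfu hpu hTu hbu.
have Sy := form_sesq hfy; rewrite hTy in Sy.
have Su := form_sesq hfu; rewrite hTu in Su.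
have posy v : 0 <= fval y v v by apply: fval_ge0.
have posu v : 0 <= fval u v v by apply: fval_ge0.
have hUa := Fq_ge0 a hfu hpu.
have step1 : forall k0, 0 < k0 -> Fq y a <= (1 + k0) ^+ 2 * Fq u a.
  move=> k0 ht; apply/ler_addgt0Pr => e he.
  have hB : 0 <= 1 + k0^-1 by have := invr_ge0 k0; rewrite (ltW ht); lra.
  have hA : 0 <= 1 + k0 by lra.
  set C := (1 + k0) * (1 + k0^-1) * Ku + (1 + k0^-1) * Ky.
  have hC : 0 <= C by rewrite /C addr_ge0 // mulr_ge0 // mulr_ge0.
  have hdel : 0 < e / (C + 1) by apply: divr_gt0 => //; lra.
  have hsd : 0 < Num.sqrt (e / (C + 1)) by rewrite sqrtr_gt0.
  have [p Dp hpn] := hD a _ hsd.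
  have hq : nip (a - p) < e / (C + 1) by move: hpn; rewrite hnormE ltr_sqrt.
  have epq : p + (a - p) = a by rewrite addrC subrK.
  have eaq : a + - (a - p) = p by rewrite opprB addrC subrK.
  have G1 := ineqG p (a - p) Sy posy ht; rewrite epq in G1.
  have G2 := ineqG a (- (a - p)) Su posu ht; rewrite eaq in G2.
  have e1 := hDp p Dp.
  have h3 := hKy (a - p); have h4 := hKu (- (a - p)); rewrite nipN in h4.
  have hn := nip_ge0 (a - p).
  move: G1 G2 e1 h3 h4 hq hn.
  rewrite -/(Fq y a) -/(Fq y p) -/(Fq y (a - p)) -/(Fq u a) -/(Fq u p) -/(Fq u (- (a - p))).
  set n := nip (a - p); set Yp := Fq y p; set Yq := Fq y (a - p).
  set Up := Fq u p; set Un := Fq u (- (a - p)); set Ua := Fq u a; set Ya := Fq y a.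
  move=> G1 G2 e1 h3 h4 hq hn.
  have m1 : (1 + k0) * Up <= (1 + k0) * ((1 + k0) * Ua + (1 + k0^-1) * Un).
    by apply: ler_wpM2l.
  have m2 : (1 + k0^-1) * Yq <= (1 + k0^-1) * (Ky * n) by apply: ler_wpM2l.
  have m3 : (1 + k0) * ((1 + k0^-1) * Un) <= (1 + k0) * ((1 + k0^-1) * (Ku * n)).
    by apply: ler_wpM2l => //; apply: ler_wpM2l.
  have m4 : C * n <= C * (e / (C + 1)) by apply: ler_wpM2l => //; apply: ltW.
  have m5 : C * (e / (C + 1)) <= e.
    rewrite mulrA ler_pdivrMr; last by lra.
    nra.
  rewrite -e1 in m1.
  by apply: (arith1 G1 m1 m2 m3 _ m4 m5).
apply/ler_addgt0Pr => e he.
have h3 : 0 < 3 * Fq u a + 3 by lra.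
set k1 := e / (3 * Fq u a + 3).
have hk1 : 0 < k1 by apply: divr_gt0.
have et1 : k1 * (3 * Fq u a + 3) = e by rewrite /k1 mulfVK // gt_eqF.
case: (lerP k1 1) => hk1'.
- have := step1 k1 hk1.
  have hk1m : 0 <= 1 - k1 by rewrite subr_ge0.
  have := mulr_ge0 hk1m (mulr_ge0 (ltW hk1) hUa).
  nra.
- have := step1 1 ltr01. nra.
Qed.

Lemma bounded_agree y u (D : set V) : is_form ip y -> form_positive y -> fdom y = setT ->
  form_bounded ip y -> is_form ip u -> form_positive u -> fdom u = setT ->
  form_bounded ip u -> dense ip D -> (forall p, D p -> Fq y p = Fq u p) -> y = u.
Proof.
move=> hfy hpy hTy hby hfu hpu hTu hbu hD hDp.
have hle := diag_le hfy hpy hTy hby hfu hpu hTu hbu hD hDp.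
have hge := diag_le hfu hpu hTu hbu hfy hpy hTy hby hD (fun p hp => esym (hDp p hp)).
have Sy := form_sesq hfy; rewrite hTy in Sy.
have Su := form_sesq hfu; rewrite hTu in Su.
have hdiag : forall a, fval y a a = fval u a a.
  by move=> a; rewrite !fvalC //; congr (_%:C); apply/eqP; rewrite eq_le hle hge.
have hval := polar Sy Su hdiag.
destruct y as [Dy fy]; destruct u as [Du fu].
rewrite /fdom /= in hTy hTu; subst Dy Du; congr pair; apply: funext => a; apply: funext => b; exact: hval.
Qed.

End Dense.

Section Final.
Hypothesis Hcomplete : hcomplete ip.
Implicit Types t s w : frm.

Lemma zero_sesq : sesq (setT : set V) (fun _ _ => 0).
Proof. split; [by split | by move=> *; rewrite mulr0 addr0 | by move=> *; rewrite mulr0 addr0]. Qed.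

Lemma m_zero : form_m ip (zero_form (V := V)) = 0.
Proof.
rewrite /form_m.
set S := [set _ | _ in _].
case: (pselect (exists x, fdom (zero_form (V:=V)) x /\ hnorm ip x = 1)) => [[x hx]|hn].
  have -> : S = [set 0].
    apply/seteqP; split => r.
    - by case=> v _ <-.
    - by move=> ->; exists x.
  by rewrite inf1.
have -> : S = set0.
  apply/seteqP; split => r // [v hv _]; exfalso; apply: hn; by exists v.
by rewrite inf0.
Qed.

Lemma zero_Cf : Cf ip (zero_form (V := V)).
Proof.
have hf : is_form ip (zero_form (V := V)).
  split.
  - by split.
  - move=> x e he; exists x => //; rewrite subrr hnormE /nip (f0l ip_sesq) //.
    by rewrite sqrtr0.
  - by move=> *; rewrite /= mulr0 addr0.
  - by move=> *; rewrite /= mulr0 addr0.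
  - by move=> x y h; exfalso; apply: h.
split; first split => //.
move=> u _ hC.
have tz v : tnorm ip zero_form v = hnorm ip v.
  rewrite tnormE /Q m_zero /Fq /= addr0 add0r mul1r. by [].
have [x hx] : exists x, hconverges_to ip u x.
  apply: Hcomplete => e he; have [N hN] := hC e he; exists N => n m hn hm.
  by rewrite -tz; apply: hN.
exists x => // e he; have [N hN] := hx e he; exists N => n hn.
by rewrite tz; apply: hN.
Qed.

Implicit Types x y u xy yu v : frm.

Lemma sum_uniq t s w w' : form_sum_is t s w -> form_sum_is t s w' -> w = w'.
Proof.
case=> d1 v1 [d2 v2]; destruct w as [Dw fw]; destruct w' as [Dw' fw'].
rewrite /fdom /= in d1 d2 v1 v2; subst Dw Dw'.
congr pair; apply: funext => a; apply: funext => b; by rewrite v1 v2.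
Qed.

Lemma sum_assoc x y u xy yu v : form_sum_is x y xy -> form_sum_is xy u v ->
  form_sum_is y u yu -> form_sum_is x yu v.
Proof.
move=> hxy hv hyu; split.
  by rewrite (sum_dom hv) (sum_dom hxy) (sum_dom hyu) setIA.
move=> a b; case: hv => hdv hvv; rewrite hvv.
case: (pselect (fdom v a /\ fdom v b)) => h; last by rewrite !asboolF.
rewrite !asboolT //.
have Dv c : fdom v c -> [/\ fdom xy c, fdom yu c & fdom u c].
  rewrite hdv (sum_dom hxy) (sum_dom hyu) => -[[c1 c2] c3]; split=> //; split.
case: h => /Dv[ha1 ha2 ha3] /Dv[hb1 hb2 hb3].
by rewrite (sum_in hxy) // (sum_in hyu) // addrA.
Qed.

Lemma VfT t : Vf ip t -> form_bounded ip t -> fdom t = setT.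
Proof. by case. Qed.

Lemma setI_T (A B : set V) : A `&` B = setT -> A = setT /\ B = setT.
Proof.
move=> e; split; apply/seteqP; split => a // _;
  have : (A `&` B) a by rewrite e.
all: by case.
Qed.

Lemma assoc_defd x y u xy yu : Vf ip x -> Vf ip y -> Vf ip u -> Vf ip xy ->
  form_sum_is x y xy -> form_sum_is y u yu -> defd x y -> defd xy u ->
  defd y u /\ defd x yu.
Proof.
move=> hx hy hu hxy sxy syu dxy dv.
case: (hx) => hfx hpx _; case: (hy) => hfy hpy _; case: (hu) => hfu hpu _.
have eyu := sum_dom syu.
case: dv => [bxy|[bu|exyu]].
- have T := VfT hxy bxy; have := T; rewrite (sum_dom sxy) => /setI_T[Tx Ty].
  have bx : form_bounded ip x.
    by apply: (bounded_part hfy hpy sxy) => // a _; rewrite T.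
  have by' : form_bounded ip y.
    by apply: (bounded_part hfx hpx (sum_C sxy)) => // a _; rewrite T.
  by split; left.
- have Tu := VfT hu bu.
  split; first by right; left.
  case: dxy => [bx|[by'|exy]].
  + by left.
  + by right; left; apply: (sum_bounded hfy hpy hfu hpu syu).
  + by right; right; rewrite eyu Tu setIT.
- rewrite (sum_dom sxy) in exyu.
  case: dxy => [bx|[by'|exy]].
  + have Tx := VfT hx bx; rewrite Tx setTI in exyu.
    by split; [right; right | left].
  + have Ty := VfT hy by'; rewrite Ty setIT in exyu.
    by split; [left | right; right; rewrite eyu Ty setTI].
  + rewrite -exy setIid in exyu.
    by split; right; right; rewrite ?eyu -exy -exyu ?setIid.
Qed.

Definition opQ := restrict_op (Cf ip) (@oplus_is R V ip).

Lemma op_comm x y w : opQ x y w -> opQ y x w.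
Proof.
case=> -[hd hs] hQ; split => //; split; last exact: sum_C.
by case: hd => [h|[h|h]]; [right; left | left | right; right].
Qed.

Lemma assoc1 x y u : Cf ip x -> Cf ip y -> Cf ip u ->
  forall xy v, opQ x y xy -> opQ xy u v -> exists2 yu, opQ y u yu & opQ x yu v.
Proof.
move=> Qx Qy Qu xy v [[dxy sxy] Qxy] [[dv sv] Qv].
set yu : frm := (fdom y `&` fdom u, fun a b =>
  if `[< (fdom y `&` fdom u) a /\ (fdom y `&` fdom u) b >] then fval y a b + fval u a b else 0).
have syu : form_sum_is y u yu by split.
have [dyu dxyu] := assoc_defd Qx.1 Qy.1 Qu.1 Qxy.1 sxy syu dxy dv.
have Qyu : Cf ip yu.
  split; first exact: (sum_Vf Qy.1 Qu.1 dyu syu).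
  exact: (sum_closed Qy Qu dyu syu).
exists yu; first by split.
split => //; split => //; exact: (sum_assoc sxy sv syu).
Qed.

Lemma eq_on_dom y u : is_form ip y -> is_form ip u -> fdom y = fdom u ->
  (forall a b, fdom y a -> fdom y b -> fval y a b = fval u a b) -> y = u.
Proof.
move=> hy hu hd hv.
have hval : fval y = fval u.
  apply: funext => a; apply: funext => b.
  case: (pselect (fdom y a /\ fdom y b)) => [[ha hb]|h]; first exact: hv.
  by rewrite !fval_out // -hd.
destruct y as [Dy fy]; destruct u as [Du fu].
by rewrite /fdom /fval /= in hd hval *; rewrite hd hval.
Qed.

Lemma sum_agree x y u w a b : form_sum_is x y w -> form_sum_is x u w ->
  fdom w a -> fdom w b -> fval y a b = fval u a b.
Proof.
move=> sxy sxu ha hb; have e1 := sum_in sxy ha hb; have e2 := sum_in sxu ha hb.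
by apply: (@addrI _ (fval x a b)); rewrite -e1 -e2.
Qed.

Lemma cancel_half x y u w : Vf ip y -> Vf ip u -> form_sum_is x y w -> form_sum_is x u w ->
  form_bounded ip y -> fdom x = fdom u -> fdom x = setT.
Proof.
move=> hy hu sxy sxu [M hM] exu.
have Ty := VfT hy (ex_intro _ M hM).
have e1 : fdom w = fdom x by rewrite (sum_dom sxy) Ty setIT.
have e2 : fdom w = fdom u by rewrite (sum_dom sxu) -exu setIid.
have bu : form_bounded ip u.
  exists M => v hv h1; have hw : fdom w v by rewrite e2.
  rewrite -(sum_agree sxy sxu hw hw).
  by apply: hM => //; rewrite Ty.
by rewrite -e1 e2; apply: VfT.
Qed.

Lemma cancel_lem x y u w : Vf ip x -> Vf ip y -> Vf ip u ->
  form_sum_is x y w -> form_sum_is x u w -> defd x y -> defd x u -> y = u.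
Proof.
move=> hx hy hu sxy sxu dxy dxu.
have key : fdom x = setT \/ (fdom x = fdom y /\ fdom x = fdom u) \/
           (form_bounded ip y /\ form_bounded ip u).
  case: dxy => [bx|[by'|exy]].
  - by left; apply: VfT.
  - case: dxu => [bx|[bu|exu]].
    + by left; apply: VfT.
    + by right; right.
    + by left; apply: (cancel_half hy hu sxy sxu).
  - case: dxu => [bx|[bu|exu]].
    + by left; apply: VfT.
    + by left; apply: (cancel_half hu hy sxu sxy).
    + by right; left.
have fin : fdom w = fdom y -> fdom w = fdom u -> y = u.
  move=> e1 e2; case: (hy) => hfy' _ _; case: (hu) => hfu' _ _.
  apply: eq_on_dom; [exact: hfy' | exact: hfu' | by rewrite -e1 -e2 |].
  by move=> a b ha hb; apply: (sum_agree sxy sxu); rewrite e1.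
case: key => [Tx|[[exy exu]|[by' bu]]].
- by apply: fin; [rewrite (sum_dom sxy) | rewrite (sum_dom sxu)]; rewrite Tx setTI.
- by apply: fin; [rewrite (sum_dom sxy) -exy | rewrite (sum_dom sxu) -exu]; rewrite setIid.
- have Ty := VfT hy by'; have Tu := VfT hu bu.
  case: (hx) => hfx _ _; case: (hfx) => _ hdx _ _ _.
  case: (hy) => hfy hpy _; case: (hu) => hfu hpu _.
  apply: (bounded_agree hfy hpy Ty by' hfu hpu Tu bu hdx) => p hp.
  have hpw : fdom w p by rewrite (sum_dom sxy) Ty setIT.
  by rewrite /Fq (sum_agree sxy sxu hpw hpw).
Qed.

Lemma zero_char x : is_form ip x -> fdom x = setT -> (forall a, fval x a a = 0) ->
  x = zero_form.
Proof.
move=> hf hT h0.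
have Sx := form_sesq hf; rewrite hT in Sx.
have hv := polar Sx zero_sesq h0.
destruct x as [Dx fx]; rewrite /fdom /= in hT; subst Dx.
by congr pair; apply: funext => a; apply: funext => b; apply: hv.
Qed.

Lemma positivity x y : Cf ip x -> Cf ip y -> opQ x y zero_form ->
  x = zero_form /\ y = zero_form.
Proof.
move=> [hx _] [hy _] [[_ s] _].
have := sum_dom s; rewrite /fdom /= => /esym /setI_T [Tx Ty].
case: (hx) => hfx hpx _; case: (hy) => hfy hpy _.
have h a : fval x a a = 0 /\ fval y a a = 0.
  have e := sum_in s (I : setT a) (I : setT a).
  rewrite /= in e.
  have := paddr_eq0 (fval_ge0 a hfx hpx) (fval_ge0 a hfy hpy).
  by rewrite -e eqxx => /esym /andP[/eqP -> /eqP ->].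
by split; apply: zero_char => // a; case: (h a).
Qed.

Lemma neutral x : Cf ip x -> opQ x zero_form x.
Proof.
move=> Qx; split => //; split.
  by right; left; exists 0 => v _ _; rewrite /=.
split; first by rewrite /fdom /= setIT.
move=> a b; case: (pselect (fdom x a /\ fdom x b)) => h.
  by rewrite asboolT //= addr0.
by rewrite asboolF // fval_out //; case: Qx => -[].
Qed.

End Final.
End Main.

Theorem theorem4p15 (R : realType) (V : lmodType R[i]) (ip : V -> V -> R[i])
  (Hip : is_inner_product ip) (Hcomplete : hcomplete ip)
  (Hinf : infinite_dimensional (V := V)) :
  generalized_effect_algebra (Cf ip)
    (restrict_op (Cf ip) (@oplus_is R V ip)) (zero_form (V := V)).
Proof.
split; first exact: (zero_Cf Hip Hcomplete).
split; first split.
- by move=> x y w w' _ _ [[_ s1] _] [[_ s2] _]; apply: (sum_uniq s1 s2).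
- by move=> x y w _ _ [_ h].
- by move=> x y w _ _ h; apply: (op_comm h).
split.
- move=> x y u Qx Qy Qu; split.
  + exact: (assoc1 Hip Qx Qy Qu).
  + move=> yu v h1 h2.
    have h1' := op_comm h1; have h2' := op_comm h2.
    have [yx h3 h4] := assoc1 Hip Qu Qy Qx h1' h2'.
    by exists yx; [apply: op_comm | apply: op_comm].
- by move=> x Qx; apply: (neutral Qx).
- move=> x y u w Qx Qy Qu [[d1 s1] _] [[d2 s2] _].
  exact: (cancel_lem Hip Qx.1 Qy.1 Qu.1 s1 s2 d1 d2).
- by move=> x y Qx Qy h; apply: (positivity Qx Qy h).
Qed.
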